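(* Let $\mathrm{X} \coloneqq \{\lambda_1, \dots, \lambda_L\}$, $\mathrm{X}_1 \coloneqq \{\lambda_2, \dots, \lambda_L\}$ and $\mathrm{X}_1^0 \coloneqq \{\lambda_0, \lambda_2, \dots, \lambda_L\}$. The functions $\mathcal{Z}$ and $\mathcal{H}$ are related through the equation \[ \Omega_0 \; \mathcal{Z}(\mathrm{X}) + \Omega_1 \; \mathcal{Z}(\mathrm{X}_1^0) = \Upsilon_0 \; \mathcal{H} (\mathrm{X}_1 \mid \lambda_0 , \lambda_1 ) + \Upsilon_1 \; \mathcal{H} (\mathrm{X}_1 \mid \lambda_1 , \lambda_0 ) \] with coefficients \begin{align*} \Omega_0 &\coloneqq \frac{a(\lambda_1 - \lambda_0)}{d_{3,3}(\lambda_1 - \lambda_0)} \Lambda (\lambda_0), &\Omega_1 &\coloneqq \left[ \frac{d_{1,2}(\lambda_1 - \lambda_0)}{d_{3,2}(\lambda_1 - \lambda_0)} - \frac{d_{1,3}(\lambda_1 - \lambda_0)}{d_{3,3}(\lambda_1 - \lambda_0)} \right] \Lambda (\lambda_1), \\ \Upsilon_0 &\coloneqq \frac{a(\lambda_1 - \lambda_0)}{d_{3,2}(\lambda_1 - \lambda_0)} \omega(\lambda_0), &\Upsilon_1 &\coloneqq \left[ \frac{d_{2,3}(\lambda_1 - \lambda_0)}{d_{3,3}(\lambda_1 - \lambda_0)} - \frac{d_{2,2}(\lambda_1 - \lambda_0)}{d_{3,2}(\lambda_1 - \lambda_0)} \right] \omega(\lambda_1). \end{align*}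
   Context: Setting: the Izergin–Korepin (IK) and Fateev–Zamolodchikov (FZ) nineteen-vertex models. With $x = e^{2\lambda}$, $q = e^{\gamma}$ and $\zeta = q$ (FZ) or $\zeta = -q^3$ (IK), the statistical weights are $a(\lambda) = (x-\zeta)(x-q^2)$, $b(\lambda) = q(x-1)(x-\zeta)$, $c(\lambda) = (1-q^2)(x-\zeta)$, $\bar c(\lambda) = x(1-q^2)(x-\zeta)$, and, with $\beta' \coloneqq 4-\beta$, $d_{\alpha,\beta}(\lambda) = q(x-1)(x-\zeta) + x(q^2-1)(\zeta-1)$ if $\alpha=\beta=\beta'$; $(x-1)[(x-\zeta)+x(q^2-1)]$ if $\alpha=\beta\neq\beta'$; $(q^2-1)[\zeta(x-1)q^{(\alpha-\beta)/2} - \delta_{\alpha\beta'}(x-\zeta)]$ if $\alpha<\beta$; $x(q^2-1)[(x-1)q^{(\alpha-\beta)/2} - \delta_{\alpha\beta'}(x-\zeta)]$ if $\alpha>\beta$. These form a $9\times 9$ $\mathcal{R}$-matrix $\mathcal{R}(\lambda)$ on $\mathbb{C}^3\otimes\mathbb{C}^3$ solving the Yang–Baxter equation. The monodromy matrix is $\mathcal{T}(\lambda) = \mathcal{R}_{a1}(\lambda-\mu_1)\cdots\mathcal{R}_{aL}(\lambda-\mu_L)$ (inhomogeneities $\mu_j$), a $3\times3$ matrix in auxiliary space whose $(1,1)$, $(1,2)$, $(1,3)$ entries are denoted $\mathcal{A}(\lambda)$, $\mathcal{B}(\lambda)$, $\mathcal{E}(\lambda)$. Let $\ket{0} = e_1^{\otimes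 L}$, $\bra{\bar 0} = (e_3^{\otimes L})^{T}$. Partition functions (domain-wall type boundaries): $\mathcal{Z}(\lambda_1,\dots,\lambda_L) = \bra{\bar 0}\mathcal{E}(\lambda_L)\cdots\mathcal{E}(\lambda_1)\ket{0}$ (symmetric in its arguments), and $\mathcal{F}(u_1,\dots,u_{L-1}\mid v_1,v_2) = \bra{\bar 0}\mathcal{E}(u_{L-1})\cdots\mathcal{E}(u_1)\mathcal{B}(v_2)\mathcal{B}(v_1)\ket{0}$ (symmetric in the $u_i$). Define $\omega(\lambda) \coloneqq \prod_{j=1}^L (e^{2\lambda} - e^{2\mu_j}\zeta)$ and $\mathcal{H}$ by $\mathcal{F}(u_1,\dots,u_{L-1}\mid v_1,v_2) = \omega(v_1)\,\mathcal{H}(u_1,\dots,u_{L-1}\mid v_1,v_2)$ ($\mathcal{F}$ vanishes at the zeros of $\omega(v_1)$). Also $\Lambda(\lambda) \coloneqq \prod_{j=1}^L a(\lambda-\mu_j)$. A set of variables as argument denotes the corresponding (symmetric) arguments. *)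

(* Defs.v *)
(* Izergin-Korepin / Fateev-Zamolodchikov 19-vertex models. *)
From HB Require Import structures.
From mathcomp Require Import all_boot all_order all_algebra.
Set Implicit Arguments. Unset Strict Implicit. Unset Printing Implicit Defensive.
Import Order.TTheory GRing.Theory Num.Theory.
Local Open Scope ring_scope.

(* Multiplicative parametrization:
     s        = e^{gamma/2}   (so q = e^gamma = s^2 and q^{k/2} = s^k),
     x        = e^{2 lambda}  for a spectral parameter lambda,
     y j      = e^{2 mu_j}    for the inhomogeneities.
   A weight w(lambda - mu) is then w evaluated at x / y. *)

Inductive model := FZ | IK.

Section NineteenVertex.
Variable K : fieldType.
Variable m : model.
Variable s : K.

Definition qpar : K := s ^+ 2.

Definition zeta : K :=
  match m with FZ => qpar | IK => - qpar ^+ 3 end.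

Definition wa (x : K) : K := (x - zeta) * (x - qpar ^+ 2).
Definition wb (x : K) : K := qpar * (x - 1) * (x - zeta).
Definition wc (x : K) : K := (1 - qpar ^+ 2) * (x - zeta).
Definition wcb (x : K) : K := x * (1 - qpar ^+ 2) * (x - zeta).

(* d_{alpha,beta}, alpha beta in {1,2,3}; q^{(alpha-beta)/2} = s^(alpha-beta) *)
Definition wd (al be : nat) (x : K) : K :=
  let bp := (4 - be)%N in
  let delta : K := (al == bp)%:R in
  let pw : K := s ^ (al%:Z - be%:Z) in
  if (al == be) && (al == bp) then
    qpar * (x - 1) * (x - zeta) + x * (qpar ^+ 2 - 1) * (zeta - 1)
  else if al == be then
    (x - 1) * ((x - zeta) + x * (qpar ^+ 2 - 1))
  else if (al < be)%N then
    (qpar ^+ 2 - 1) * (zeta * (x - 1) * pw - delta * (x - zeta))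
  else
    x * (qpar ^+ 2 - 1) * ((x - 1) * pw - delta * (x - zeta)).

(* Entry <e_i (x) e_k | R(x) | e_j (x) e_l> of the 9x9 R-matrix on C^3 (x) C^3,
   indices i k j l in {1,2,3} (first factor = auxiliary space). *)
Definition Rent (x : K) (i k j l : nat) : K :=
  if (i + k == 4)%N then (if (j + l == 4)%N then wd i j x else 0)
  else if i == k then (if (j == i) && (l == i) then wa x else 0)
  else if (j == i) && (l == k) then wb x
  else if (j == k) && (l == i) then (if (i < k)%N then wc x else wcb x)
  else 0.

Variable L : nat.
Variable y : 'I_L -> K.

(* basis states of the quantum space (C^3)^{(x) L}: e_{st 0 + 1} (x) ... *)
Definition state := {ffun 'I_L -> 'I_3}.

(* For fixed quantum basis states (out, in), the 3x3 auxiliary matrix of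
   site j: entry (c0, c1) = <e_c0 (x) e_out_j | R_{aj}(lambda - mu_j) | e_c1 (x) e_in_j> *)
Definition site_mx (x : K) (so si : state) (j : 'I_L) : 'M[K]_3 :=
  \matrix_(c0 < 3, c1 < 3)
     Rent (x / y j) c0.+1 (so j).+1 c1.+1 (si j).+1.

(* Monodromy matrix T(lambda) = R_{a1} ... R_{aL}; entry (a,b) in auxiliary
   space as an operator on the quantum space, given by its matrix elements
   <out| T_ab(lambda) |in>. *)
Definition Tmono (a b : 'I_3) (x : K) (so si : state) : K :=
  (\prod_(j < L) site_mx x so si j) a b.

Definition opA (x : K) := Tmono 0 0 x.
Definition opB (x : K) := Tmono 0 1 x.
Definition opE (x : K) := Tmono 0 2 x.

Definition op_apply (O : state -> state -> K) (v : state -> K) : state -> K :=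
  fun so => \sum_(si : state) O so si * v si.

(* |0> = e_1^{(x) L} *)
Definition vac : state -> K := fun st => (st == [ffun _ => (0 : 'I_3)])%:R.
(* <0bar| = (e_3^{(x) L})^T, as a state index *)
Definition dualvac_state : state := [ffun _ => (2 : 'I_3)].

(* Z(l_1,...,l_k) = <0bar| E(l_k) ... E(l_1) |0>   (E(l_1) acts first) *)
Definition Zpf (ls : seq K) : K :=
  foldl (fun v l => op_apply (opE l) v) vac ls dualvac_state.

(* F(u_1,...,u_k | v1, v2) = <0bar| E(u_k) ... E(u_1) B(v2) B(v1) |0> *)
Definition Fpf (us : seq K) (v1 v2 : K) : K :=
  foldl (fun v l => op_apply (opE l) v)
        (op_apply (opB v2) (op_apply (opB v1) vac)) us dualvac_state.

Definition omega (x : K) : K := \prod_(j < L) (x - y j * zeta).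

Definition Lam (x : K) : K := \prod_(j < L) wa (x / y j).

Definition Hpf (us : seq K) (v1 v2 : K) : K := Fpf us v1 v2 / omega v1.

End NineteenVertex.

(* Main.v *)
Require Import Defs.
From HB Require Import structures.
From mathcomp Require Import all_boot all_order all_algebra.
From mathcomp Require Import mxtens.
Set Implicit Arguments. Unset Strict Implicit. Unset Printing Implicit Defensive.
Import Order.TTheory GRing.Theory Num.Theory.
Local Open Scope ring_scope.
From mathcomp Require Import ring zify.
From Stdlib Require Import FunctionalExtensionality.

Arguments wd : simpl never.

Section S.
Variable K : fieldType.
Variable s : K.
Hypothesis s0 : s != 0.

Lemma e12 : s ^ (1%:Z - 2%:Z) = (s ^+ 1)^-1. Proof. by []. Qed.
Lemma e13 : s ^ (1%:Z - 3%:Z) = (s ^+ 2)^-1. Proof. by []. Qed.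
Lemma e23 : s ^ (2%:Z - 3%:Z) = (s ^+ 1)^-1. Proof. by []. Qed.
Lemma e21 : s ^ (2%:Z - 1%:Z) = s ^+ 1. Proof. by []. Qed.
Lemma e31 : s ^ (3%:Z - 1%:Z) = s ^+ 2. Proof. by []. Qed.
Lemma e32 : s ^ (3%:Z - 2%:Z) = s ^+ 1. Proof. by []. Qed.
Lemma wdF11 x : wd FZ s 1 1 x = (x-1)*((x - s^+2) + x*(s^+4 - 1)).
Proof. rewrite /wd /zeta /qpar /= ?e12 ?e13 ?e23 ?e21 ?e31 ?e32; field; by rewrite ?s0. Qed.
Lemma wdF33 x : wd FZ s 3 3 x = (x-1)*((x - s^+2) + x*(s^+4 - 1)).
Proof. rewrite /wd /zeta /qpar /= ?e12 ?e13 ?e23 ?e21 ?e31 ?e32; field; by rewrite ?s0. Qed.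
Lemma wdF22 x : wd FZ s 2 2 x = s^+2 * (x - 1) * (x - s^+2) + x * (s^+4 - 1) * (s^+2 - 1).
Proof. rewrite /wd /zeta /qpar /= ?e12 ?e13 ?e23 ?e21 ?e31 ?e32; field; by rewrite ?s0. Qed.
Lemma wdF12 x : wd FZ s 1 2 x = (s^+4 - 1) * (s * (x - 1)).
Proof. rewrite /wd /zeta /qpar /= ?e12 ?e13 ?e23 ?e21 ?e31 ?e32; field; by rewrite ?s0. Qed.
Lemma wdF13 x : wd FZ s 1 3 x = (s^+4 - 1) * ((x - 1) - (x - s^+2)).
Proof. rewrite /wd /zeta /qpar /= ?e12 ?e13 ?e23 ?e21 ?e31 ?e32; field; by rewrite ?s0. Qed.
Lemma wdF23 x : wd FZ s 2 3 x = (s^+4 - 1) * (s * (x - 1)).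
Proof. rewrite /wd /zeta /qpar /= ?e12 ?e13 ?e23 ?e21 ?e31 ?e32; field; by rewrite ?s0. Qed.
Lemma wdF21 x : wd FZ s 2 1 x = x * (s^+4 - 1) * ((x - 1) * s).
Proof. rewrite /wd /zeta /qpar /= ?e12 ?e13 ?e23 ?e21 ?e31 ?e32; field; by rewrite ?s0. Qed.
Lemma wdF31 x : wd FZ s 3 1 x = x * (s^+4 - 1) * ((x - 1) * s^+2 - (x - s^+2)).
Proof. rewrite /wd /zeta /qpar /= ?e12 ?e13 ?e23 ?e21 ?e31 ?e32; field; by rewrite ?s0. Qed.
Lemma wdF32 x : wd FZ s 3 2 x = x * (s^+4 - 1) * ((x - 1) * s).
Proof. rewrite /wd /zeta /qpar /= ?e12 ?e13 ?e23 ?e21 ?e31 ?e32; field; by rewrite ?s0. Qed.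
Definition wdFs := (wdF11, wdF33, wdF22, wdF12, wdF13, wdF23, wdF21, wdF31, wdF32).
Lemma wdI11 x : wd IK s 1 1 x = (x-1)*((x + s^+6) + x*(s^+4 - 1)).
Proof. rewrite /wd /zeta /qpar /= ?e12 ?e13 ?e23 ?e21 ?e31 ?e32; field; by rewrite ?s0. Qed.
Lemma wdI33 x : wd IK s 3 3 x = (x-1)*((x + s^+6) + x*(s^+4 - 1)).
Proof. rewrite /wd /zeta /qpar /= ?e12 ?e13 ?e23 ?e21 ?e31 ?e32; field; by rewrite ?s0. Qed.
Lemma wdI22 x : wd IK s 2 2 x = s^+2 * (x - 1) * (x + s^+6) + x * (s^+4 - 1) * (- s^+6 - 1).
Proof. rewrite /wd /zeta /qpar /= ?e12 ?e13 ?e23 ?e21 ?e31 ?e32; field; by rewrite ?s0. Qed.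
Lemma wdI12 x : wd IK s 1 2 x = (s^+4 - 1) * (- s^+5 * (x - 1)).
Proof. rewrite /wd /zeta /qpar /= ?e12 ?e13 ?e23 ?e21 ?e31 ?e32; field; by rewrite ?s0. Qed.
Lemma wdI13 x : wd IK s 1 3 x = (s^+4 - 1) * (- s^+4 * (x - 1) - (x + s^+6)).
Proof. rewrite /wd /zeta /qpar /= ?e12 ?e13 ?e23 ?e21 ?e31 ?e32; field; by rewrite ?s0. Qed.
Lemma wdI23 x : wd IK s 2 3 x = (s^+4 - 1) * (- s^+5 * (x - 1)).
Proof. rewrite /wd /zeta /qpar /= ?e12 ?e13 ?e23 ?e21 ?e31 ?e32; field; by rewrite ?s0. Qed.
Lemma wdI21 x : wd IK s 2 1 x = x * (s^+4 - 1) * ((x - 1) * s).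
Proof. rewrite /wd /zeta /qpar /= ?e12 ?e13 ?e23 ?e21 ?e31 ?e32; field; by rewrite ?s0. Qed.
Lemma wdI31 x : wd IK s 3 1 x = x * (s^+4 - 1) * ((x - 1) * s^+2 - (x + s^+6)).
Proof. rewrite /wd /zeta /qpar /= ?e12 ?e13 ?e23 ?e21 ?e31 ?e32; field; by rewrite ?s0. Qed.
Lemma wdI32 x : wd IK s 3 2 x = x * (s^+4 - 1) * ((x - 1) * s).
Proof. rewrite /wd /zeta /qpar /= ?e12 ?e13 ?e23 ?e21 ?e31 ?e32; field; by rewrite ?s0. Qed.
Definition wdIs := (wdI11, wdI33, wdI22, wdI12, wdI13, wdI23, wdI21, wdI31, wdI32).

Definition p0 : 'I_3 := @Ordinal 3 0 isT.
Definition p1 : 'I_3 := @Ordinal 3 1 isT.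
Definition p2 : 'I_3 := @Ordinal 3 2 isT.

Definition R3 md x (i k j l : 'I_3) := Rent md s x i.+1 k.+1 j.+1 l.+1.

Lemma Rent0 md x (i k j l : nat) : (i + k != j + l)%N -> Rent md s x i k j l = 0.
Proof.
rewrite /Rent.
case: ifP => [/eqP h1|_]; first by case: ifP => // /eqP h2; rewrite h1 h2.
case: ifP => [/eqP ->|_]; first by case: ifP => // /andP[/eqP -> /eqP ->]; rewrite eqxx.
case: ifP => [/andP[/eqP -> /eqP ->]|_]; first by rewrite eqxx.
case: ifP => [/andP[/eqP -> /eqP ->]|_] //; by rewrite addnC eqxx.
Qed.

Lemma ybe_triv md (c b : K) (i k j l o i' : 'I_3) : (i + k + o != j + l + i')%N ->
  \sum_(p < 3) \sum_(r < 3) \sum_(m < 3)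
     R3 md c i k p r * R3 md (c * b) p o j m * R3 md b r m l i'
  = \sum_(p < 3) \sum_(r < 3) \sum_(m < 3)
     R3 md (c * b) i m p i' * R3 md b k o r m * R3 md c p r j l.
Proof.
move=> H.
rewrite big1 ?[RHS]big1 // => p _; rewrite big1 // => r _; rewrite big1 // => m _;
rewrite /R3.
- have [e1|e1] := eqVneq (i.+1 + m.+1)%N (p.+1 + i'.+1)%N; last by rewrite Rent0 // !mul0r.
  have [e2|e2] := eqVneq (k.+1 + o.+1)%N (r.+1 + m.+1)%N; last by rewrite (Rent0 _ _ e2) mulr0 mul0r.
  have [e3|e3] := eqVneq (p.+1 + r.+1)%N (j.+1 + l.+1)%N; last by rewrite (Rent0 _ _ e3) mulr0.
  exfalso; move/negP: H; apply; apply/eqP. move: e1 e2 e3; rewrite !addSn !addnS; lia.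
- have [e1|e1] := eqVneq (i.+1 + k.+1)%N (p.+1 + r.+1)%N; last by rewrite Rent0 // !mul0r.
  have [e2|e2] := eqVneq (p.+1 + o.+1)%N (j.+1 + m.+1)%N; last by rewrite (Rent0 _ _ e2) mulr0 mul0r.
  have [e3|e3] := eqVneq (r.+1 + m.+1)%N (l.+1 + i'.+1)%N; last by rewrite (Rent0 _ _ e3) mulr0.
  exfalso; move/negP: H; apply; apply/eqP. move: e1 e2 e3; rewrite !addSn !addnS; lia.
Qed.

Definition S3 (f : 'I_3 -> K) := f p0 + f p1 + f p2.

Lemma sum3 (F : 'I_3 -> K) : \sum_(i < 3) F i = S3 F.
Proof.
rewrite !big_ord_recl big_ord0 addr0 addrA /S3.
by do 2?congr (_ + _); congr F; apply: val_inj.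
Qed.

Definition wdP md (al be : nat) (x : K) : K :=
  match md, al, be with
  | FZ, 1%N, 1%N => (x-1)*((x - s^+2) + x*(s^+4 - 1))
  | FZ, 3%N, 3%N => (x-1)*((x - s^+2) + x*(s^+4 - 1))
  | FZ, 2%N, 2%N => s^+2 * (x - 1) * (x - s^+2) + x * (s^+4 - 1) * (s^+2 - 1)
  | FZ, 1%N, 2%N => (s^+4 - 1) * (s * (x - 1))
  | FZ, 1%N, 3%N => (s^+4 - 1) * ((x - 1) - (x - s^+2))
  | FZ, 2%N, 3%N => (s^+4 - 1) * (s * (x - 1))
  | FZ, 2%N, 1%N => x * (s^+4 - 1) * ((x - 1) * s)
  | FZ, 3%N, 1%N => x * (s^+4 - 1) * ((x - 1) * s^+2 - (x - s^+2))
  | FZ, 3%N, 2%N => x * (s^+4 - 1) * ((x - 1) * s)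
  | IK, 1%N, 1%N => (x-1)*((x + s^+6) + x*(s^+4 - 1))
  | IK, 3%N, 3%N => (x-1)*((x + s^+6) + x*(s^+4 - 1))
  | IK, 2%N, 2%N => s^+2 * (x - 1) * (x + s^+6) + x * (s^+4 - 1) * (- s^+6 - 1)
  | IK, 1%N, 2%N => (s^+4 - 1) * (- s^+5 * (x - 1))
  | IK, 1%N, 3%N => (s^+4 - 1) * (- s^+4 * (x - 1) - (x + s^+6))
  | IK, 2%N, 3%N => (s^+4 - 1) * (- s^+5 * (x - 1))
  | IK, 2%N, 1%N => x * (s^+4 - 1) * ((x - 1) * s)
  | IK, 3%N, 1%N => x * (s^+4 - 1) * ((x - 1) * s^+2 - (x + s^+6))
  | IK, 3%N, 2%N => x * (s^+4 - 1) * ((x - 1) * s)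
  | _, _, _ => wd md s al be x
  end.

Definition waP md (x : K) : K := match md with
  | FZ => (x - s^+2) * (x - s^+4) | IK => (x + s^+6) * (x - s^+4) end.
Definition wbP md (x : K) : K := match md with
  | FZ => s^+2 * (x - 1) * (x - s^+2) | IK => s^+2 * (x - 1) * (x + s^+6) end.
Definition wcP md (x : K) : K := match md with
  | FZ => (1 - s^+4) * (x - s^+2) | IK => (1 - s^+4) * (x + s^+6) end.
Definition wcbP md (x : K) : K := match md with
  | FZ => x * (1 - s^+4) * (x - s^+2) | IK => x * (1 - s^+4) * (x + s^+6) end.

Definition RentQ md (x : K) (i k j l : nat) : K :=
  match i, k, j, l with
  | 1, 1, 1, 1 => waP md x
  | 1, 2, 1, 2 => wbP md x
  | 1, 2, 2, 1 => wcP md x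
  | 1, 3, 1, 3 => wdP md 1 1 x
  | 1, 3, 2, 2 => wdP md 1 2 x
  | 1, 3, 3, 1 => wdP md 1 3 x
  | 2, 1, 1, 2 => wcbP md x
  | 2, 1, 2, 1 => wbP md x
  | 2, 2, 1, 3 => wdP md 2 1 x
  | 2, 2, 2, 2 => wdP md 2 2 x
  | 2, 2, 3, 1 => wdP md 2 3 x
  | 2, 3, 2, 3 => wbP md x
  | 2, 3, 3, 2 => wcP md x
  | 3, 1, 1, 3 => wdP md 3 1 x
  | 3, 1, 2, 2 => wdP md 3 2 x
  | 3, 1, 3, 1 => wdP md 3 3 x
  | 3, 2, 2, 3 => wcbP md x
  | 3, 2, 3, 2 => wbP md x
  | 3, 3, 3, 3 => waP md x
  | _, _, _, _ => 0
  end.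

Definition R3Q md x (i k j l : 'I_3) := RentQ md x i.+1 k.+1 j.+1 l.+1.

Lemma wdPE md al be x : wd md s al be x = wdP md al be x.
Proof.
case: md; (case: al => [|[|[|[|al]]]]; case: be => [|[|[|[|be]]]]) => //=;
by rewrite ?wdFs ?wdIs.
Qed.

Lemma ord3P (P : 'I_3 -> Prop) : P p0 -> P p1 -> P p2 -> forall i, P i.
Proof.
move=> h0 h1 h2 [[|[|[|//]]] Hi].
- by rewrite (_ : Ordinal Hi = p0) //; apply: val_inj.
- by rewrite (_ : Ordinal Hi = p1) //; apply: val_inj.
- by rewrite (_ : Ordinal Hi = p2) //; apply: val_inj.
Qed.

Lemma waPE md x : wa md s x = waP md x.
Proof. by case: md; rewrite /wa /waP /zeta /qpar; ring. Qed.
Lemma wbPE md x : wb md s x = wbP md x.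
Proof. by case: md; rewrite /wb /wbP /zeta /qpar; ring. Qed.
Lemma wcPE md x : wc md s x = wcP md x.
Proof. by case: md; rewrite /wc /wcP /zeta /qpar; ring. Qed.
Lemma wcbPE md x : wcb md s x = wcbP md x.
Proof. by case: md; rewrite /wcb /wcbP /zeta /qpar; ring. Qed.

Lemma R3QE md : R3 md = R3Q md.
Proof.
apply: functional_extensionality => x; apply: functional_extensionality => i.
apply: functional_extensionality => k; apply: functional_extensionality => j.
apply: functional_extensionality => l.
rewrite /R3 /R3Q.
elim/ord3P: i; elim/ord3P: k; elim/ord3P: j; elim/ord3P: l;
rewrite /Rent /RentQ /= ?waPE ?wbPE ?wcPE ?wcbPE ?wdPE //.
Qed.

Definition YL md (c b : K) (i k j l o i' : 'I_3) :=
  S3 (fun p => S3 (fun r => S3 (fun m =>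
     R3Q md c i k p r * R3Q md (c * b) p o j m * R3Q md b r m l i'))).
Definition YR md (c b : K) (i k j l o i' : 'I_3) :=
  S3 (fun p => S3 (fun r => S3 (fun m =>
     R3Q md (c * b) i m p i' * R3Q md b k o r m * R3Q md c p r j l))).

Lemma ybe md (c b : K) (i k j l o i' : 'I_3) :
  \sum_(p < 3) \sum_(r < 3) \sum_(m < 3)
     R3 md c i k p r * R3 md (c * b) p o j m * R3 md b r m l i'
  = \sum_(p < 3) \sum_(r < 3) \sum_(m < 3)
     R3 md (c * b) i m p i' * R3 md b k o r m * R3 md c p r j l.
Proof.
have [H|H] := eqVneq (i + k + o)%N (j + l + i')%N; last exact: ybe_triv.
have E : forall G : 'I_3 -> 'I_3 -> 'I_3 -> K,
    \sum_(p < 3) \sum_(r < 3) \sum_(m < 3) G p r m = S3 (fun p => S3 (fun r => S3 (fun m => G p r m))).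
  move=> G; rewrite sum3; congr S3; apply: functional_extensionality => p.
  rewrite sum3; congr S3; apply: functional_extensionality => r; exact: sum3.
rewrite !E R3QE.
change (YL md c b i k j l o i' = YR md c b i k j l o i').
move: H.
case: md; elim/ord3P: i; elim/ord3P: k; elim/ord3P: j; elim/ord3P: l;
  elim/ord3P: o; elim/ord3P: i' => /= H.
all: try discriminate H.
all: cbv beta iota zeta delta [YL YR S3 R3Q RentQ wdP waP wbP wcP wcbP nat_of_ord p0 p1 p2].
all: ring.
Qed.
End S.

Section M.
Variable K : fieldType.
Variable md : model.
Variable s : K.
Variable L : nat.
Variable y : 'I_L -> K.
Hypothesis s0 : s != 0.
Definition o0 : 'I_3 := @Ordinal 3 0 isT.
Definition o1 : 'I_3 := @Ordinal 3 1 isT.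
Definition o2 : 'I_3 := @Ordinal 3 2 isT.
Lemma o0E : (0 : 'I_3) = o0. Proof. exact: val_inj. Qed.
Lemma o1E : (1 : 'I_3) = o1. Proof. exact: val_inj. Qed.
Lemma o2E : (2 : 'I_3) = o2. Proof. exact: val_inj. Qed.

Lemma sum3' (F : 'I_3 -> K) : \sum_(i < 3) F i = F o0 + F o1 + F o2.
Proof.
rewrite !big_ord_recl big_ord0 addr0 addrA.
by do 2?congr (_ + _); congr F; apply: val_inj.
Qed.

Lemma ord3P' (P : 'I_3 -> Prop) : P o0 -> P o1 -> P o2 -> forall i, P i.
Proof.
move=> h0 h1 h2 [[|[|[|//]]] Hi].
- by rewrite (_ : Ordinal Hi = o0) //; apply: val_inj.
- by rewrite (_ : Ordinal Hi = o1) //; apply: val_inj.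
- by rewrite (_ : Ordinal Hi = o2) //; apply: val_inj.
Qed.

Definition s3 x j (o i : 'I_3) : 'M[K]_3 :=
  \matrix_(c0 < 3, c1 < 3) Rent md s (x / y j) c0.+1 o.+1 c1.+1 i.+1.

Definition vac0 : state L := [ffun _ => (0 : 'I_3)].

Lemma TmonoE a b x (so si : state L) :
  Tmono md s y a b x so si = (\prod_(j < L) s3 x j (so j) (si j)) a b.
Proof. by []. Qed.

Lemma s3_col0 x j o i :
  s3 x j o o0 i o0 = (i == o0)%:R * ((o == o0)%:R * wa md s (x / y j)).
Proof.
rewrite mxE; move: i o; apply: ord3P'; apply: ord3P';
rewrite /Rent /= ?(mul1r, mul0r) //.
Qed.

Lemma Avac x (mid : state L) :
  Tmono md s y o0 o0 x mid vac0 = (mid == vac0)%:R * Lam md s y x.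
Proof.
rewrite TmonoE.
have -> : \prod_(j < L) s3 x j (mid j) (vac0 j) = \prod_(j < L) s3 x j (mid j) o0.
  by apply: eq_bigr => j _; rewrite ffunE o0E.
have H : forall i, (\prod_(j < L) s3 x j (mid j) o0) i o0
    = (i == o0)%:R * \prod_(j < L) ((mid j == o0)%:R * wa md s (x / y j)).
  apply: (big_ind2 (fun (A : 'M[K]_3) c => forall i, A i o0 = (i == o0)%:R * c)).
  - by move=> i; rewrite !mxE; symmetry; apply: mulr1.
  - move=> A c B d hA hB i.
    change ((A *m B) i o0 = (i == o0)%:R * (c * d)).
    rewrite mxE sum3' !hB eqxx (_ : (o1 == o0) = false) // (_ : (o2 == o0) = false) //.
    by rewrite mul1r !mul0r !mulr0 !addr0 hA mulrA.
  - by move=> j _ i; rewrite s3_col0.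
rewrite H eqxx mul1r /Lam big_split /=; congr (_ * _).
have [->|ne] := eqVneq mid vac0.
  by rewrite big1 // => j _; rewrite ffunE o0E eqxx.
case: (pickP (fun j => mid j != o0)) => [j Hj|H0].
  by rewrite (bigD1 j) //= (negbTE Hj) mul0r.
case/eqP: ne; apply/ffunP => j; rewrite ffunE o0E.
by have := H0 j; rewrite /= => /negbFE/eqP.
Qed.

Lemma lin us : forall (v v1 v2 : state L -> K) c d,
  (forall st, v st = c * v1 st + d * v2 st) -> forall st,
  foldl (fun v l => op_apply (opE md s y l) v) v us st
  = c * foldl (fun v l => op_apply (opE md s y l) v) v1 us st
  + d * foldl (fun v l => op_apply (opE md s y l) v) v2 us st.
Proof.
elim: us => [|l us IH] v v1 v2 c d H st /=; first exact: H.
apply: IH => st'; rewrite /op_apply.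
rewrite (eq_bigr (fun si => c * (opE md s y l st' si * v1 si)
   + d * (opE md s y l st' si * v2 si))); last by move=> si _; rewrite H; ring.
by rewrite big_split /= -!mulr_sumr.
Qed.

Lemma opvac (O : state L -> state L -> K) st : op_apply O (@vac K L) st = O st vac0.
Proof.
rewrite /op_apply (bigD1 vac0) //= big1 => [|si Hsi].
  by rewrite /vac eqxx mulr1 addr0.
by rewrite /vac (negbTE Hsi) mulr0.
Qed.

Lemma s3P x j o : s3 x j o o0 o2 o0 = 0 /\ s3 x j o o0 o2 o1 = 0.
Proof. by rewrite !mxE; move: o; apply: ord3P'; rewrite /Rent. Qed.

Lemma s3Q x j o i : x / y j = zeta md s ->
  s3 x j o o0 i o0 = 0 /\ s3 x j o o0 i o1 = 0.
Proof.
move=> hx; rewrite !mxE hx; move: i o; apply: ord3P'; apply: ord3P';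
by rewrite /Rent /= /wa /wb /wc /wcb ?subrr ?(mulr0, mul0r).
Qed.

Lemma Bvac_zero v k (so : state L) : v / y k = zeta md s ->
  Tmono md s y o0 o1 v so vac0 = 0.
Proof.
move=> hv; rewrite TmonoE.
have -> : \prod_(j < L) s3 v j (so j) (vac0 j) = \prod_(j < L) s3 v j (so j) o0.
  by apply: eq_bigr => j _; rewrite ffunE o0E.
pose P (A : 'M[K]_3) := A o2 o0 = 0 /\ A o2 o1 = 0.
pose Q (A : 'M[K]_3) := forall i, A i o0 = 0 /\ A i o1 = 0.
have main : forall r : seq 'I_L, P (\prod_(j <- r) s3 v j (so j) o0)
   /\ (k \in r -> Q (\prod_(j <- r) s3 v j (so j) o0)).
  elim => [|j r [IHP IHQ]].
    by rewrite big_nil /P !mxE.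
  rewrite big_cons; set A := s3 v j (so j) o0; set B := \prod_(j <- r) _.
  have [PA1 PA2] := s3P v j (so j).
  move: IHP; rewrite /P => -[PB1 PB2].
  split.
    change ((A *m B) o2 o0 = 0 /\ (A *m B) o2 o1 = 0).
    by rewrite !mxE !sum3' PA1 PA2 PB1 PB2 !(mul0r, mulr0, add0r).
  rewrite in_cons => /orP[/eqP ek | kr] i.
    subst k.
    change ((A *m B) i o0 = 0 /\ (A *m B) i o1 = 0).
    have [Q0 Q1] := s3Q (so j) i hv.
    by rewrite !mxE !sum3' Q0 Q1 PB1 PB2 !(mul0r, mulr0, add0r).
  change ((A *m B) i o0 = 0 /\ (A *m B) i o1 = 0).
  have QB := IHQ kr.
  have [B00 B01] := QB o0; have [B10 B11] := QB o1; have [B20 B21] := QB o2.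
  by rewrite !mxE !sum3' B00 B01 B10 B11 B20 B21 !(mul0r, mulr0, add0r).
have [_ HQ] := main (index_enum 'I_L).
by have [] := HQ (mem_index_enum k) o0.
Qed.
Definition M9 := 'M[K]_(3 * 3).
Definition idx (a b : 'I_3) : 'I_(3 * 3) := mxtens_index (a, b).

Definition W x x' j o i : M9 := \sum_(m < 3) (s3 x j o m *t s3 x' j m i).
Definition V x x' j o i : M9 := \sum_(m < 3) (s3 x j m i *t s3 x' j o m).


Lemma tens11 : (1 : 'M[K]_3) *t (1 : 'M[K]_3) = (1 : M9).
Proof.
apply/matrixP => u v.
case: (mxtens_indexP u) => a b; case: (mxtens_indexP v) => c d.
rewrite tensmxE !mxE (can_eq (@mxtens_indexK 3 3)) xpair_eqE.
by case: (a == c); case: (b == d); rewrite /= ?mulr1 ?mulr0 ?mul0r.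
Qed.

Lemma prod_tens (I : Type) (r : seq I) (A B : I -> 'M[K]_3) :
  \prod_(j <- r) (A j *t B j) = ((\prod_(j <- r) A j) *t (\prod_(j <- r) B j) : M9).
Proof.
elim: r => [|j r IH]; first by rewrite !big_nil tens11.
by rewrite !big_cons IH -tensmx_mul.
Qed.

Lemma sum9 (F : 'I_(3 * 3) -> K) :
  \sum_(w < 3 * 3) F w = \sum_(p < 3) \sum_(r < 3) F (idx p r).
Proof.
rewrite (reindex (@mxtens_index 3 3)) /=; last first.
  by exists (@mxtens_unindex 3 3) => w _; [apply: mxtens_indexK | apply: mxtens_unindexK].
rewrite pair_big /=; by apply: eq_bigr => -[p r].
Qed.

Definition TT a b x c d x' (so si : state L) :=
  \sum_(mid : state L) Tmono md s y a b x so mid * Tmono md s y c d x' mid si.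

Lemma fact1 a b c d x x' (so si : state L) :
  (\prod_(j < L) W x x' j (so j) (si j)) (idx a c) (idx b d) = TT a b x c d x' so si.
Proof.
rewrite /W bigA_distr_bigA /= summxE; apply: eq_bigr => f _.
by rewrite prod_tens tensmxE.
Qed.

Lemma fact2 a b c d x x' (so si : state L) :
  (\prod_(j < L) V x x' j (so j) (si j)) (idx c a) (idx d b) = TT a b x' c d x so si.
Proof.
rewrite /V bigA_distr_bigA /= summxE; apply: eq_bigr => f _.
by rewrite prod_tens tensmxE mulrC.
Qed.

Definition Rm r : M9 := \matrix_(u, v) Rent md s r (@mxtens_unindex 3 3 u).1.+1
  (@mxtens_unindex 3 3 u).2.+1 (@mxtens_unindex 3 3 v).1.+1 (@mxtens_unindex 3 3 v).2.+1.

Lemma RmE r a b c d : Rm r (idx a b) (idx c d) = Rent md s r a.+1 b.+1 c.+1 d.+1.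
Proof. by rewrite mxE !mxtens_indexK. Qed.

Hypothesis y0 : forall j, y j != 0.

Lemma rll x x' j o i : x' != 0 ->
  Rm (x / x') *m W x x' j o i = V x x' j o i *m Rm (x / x').
Proof.
move=> x'0.
have yj := y0 j.
have Exy : x / y j = (x / x') * (x' / y j) by field; rewrite x'0 yj.
apply/matrixP => u v.
case: (mxtens_indexP u) => i1 k1; case: (mxtens_indexP v) => j1 l1.
rewrite !mxE !sum9.
transitivity (\sum_(p < 3) \sum_(r < 3) \sum_(m < 3)
     R3 s md (x / x') i1 k1 p r * R3 s md ((x / x') * (x' / y j)) p o j1 m * R3 s md (x' / y j) r m l1 i).
  apply: eq_bigr => p _; apply: eq_bigr => r _.
  rewrite RmE /W summxE mulr_sumr; apply: eq_bigr => m _.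
  by rewrite tensmxE !mxE /R3 Exy; ring.
rewrite (ybe s0).
apply: eq_bigr => p _; apply: eq_bigr => r _.
rewrite RmE /V summxE mulr_suml; apply: eq_bigr => m _.
by rewrite tensmxE !mxE /R3 Exy.
Qed.

Lemma rtt x x' (so si : state L) : x' != 0 ->
  Rm (x / x') *m \prod_(j < L) W x x' j (so j) (si j)
  = \prod_(j < L) V x x' j (so j) (si j) *m Rm (x / x').
Proof.
move=> x'0.
apply: (big_ind2 (fun A B => Rm (x / x') *m A = B *m Rm (x / x'))).
- by rewrite mulmx1 mul1mx.
- move=> A1 B1 A2 B2 h1 h2.
  change (Rm (x / x') *m (A1 *m A2) = (B1 *m B2) *m Rm (x / x')).
  by rewrite mulmxA h1 -mulmxA h2 mulmxA.
- by move=> j _; apply: rll.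
Qed.

Lemma rel31 x x' (so si : state L) : x' != 0 ->
  wa md s (x / x') * TT o0 o2 x o0 o0 x' so si =
  wd md s 1 3 (x / x') * TT o0 o2 x' o0 o0 x so si
  + wd md s 2 3 (x / x') * TT o0 o1 x' o0 o1 x so si
  + wd md s 3 3 (x / x') * TT o0 o0 x' o0 o2 x so si.
Proof.
move=> x'0.
have := congr1 (fun M : M9 => M (idx o0 o0) (idx o2 o0)) (@rtt x x' so si x'0).
rewrite /= !mxE !sum9 !sum3' !RmE !fact1 !fact2 /Rent /=.
rewrite !(mul0r, mulr0, add0r, addr0) => ->; ring.
Qed.

Lemma rel22 x x' (so si : state L) : x' != 0 ->
  wa md s (x / x') * TT o0 o1 x o0 o1 x' so si =
  wd md s 1 2 (x / x') * TT o0 o2 x' o0 o0 x so si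
  + wd md s 2 2 (x / x') * TT o0 o1 x' o0 o1 x so si
  + wd md s 3 2 (x / x') * TT o0 o0 x' o0 o2 x so si.
Proof.
move=> x'0.
have := congr1 (fun M : M9 => M (idx o0 o0) (idx o1 o1)) (@rtt x x' so si x'0).
rewrite /= !mxE !sum9 !sum3' !RmE !fact1 !fact2 /Rent /=.
rewrite !(mul0r, mulr0, add0r, addr0) => ->; ring.
Qed.

Lemma TTA a b x x' (so : state L) :
  TT a b x o0 o0 x' so vac0 = Lam md s y x' * Tmono md s y a b x so vac0.
Proof.
rewrite /TT (bigD1 vac0) //= big1 => [|mid Hmid]; last by rewrite Avac (negbTE Hmid) !mul0r mulr0.
by rewrite Avac eqxx mul1r addr0 mulrC.
Qed.
End M.

Lemma alg (K : fieldType) (wa d12 d13 d22 d23 d32 d33 L0 L1 E0 E1 B10 B01 AE : K) :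
  d33 != 0 -> d32 != 0 ->
  wa * (L0 * E1) = d13 * (L1 * E0) + d23 * B01 + d33 * AE ->
  wa * B10 = d12 * (L1 * E0) + d22 * B01 + d32 * AE ->
  wa / d33 * L0 * E1 + (d12 / d32 - d13 / d33) * L1 * E0
  = wa / d32 * B10 + (d23 / d33 - d22 / d32) * B01.
Proof.
move=> h33 h32 e1 e2.
have eAE : AE = (wa * (L0 * E1) - d13 * (L1 * E0) - d23 * B01) / d33.
  by rewrite e1; field; rewrite ?h33.
have -> : wa / d32 * B10 = (wa * B10) / d32 by rewrite mulrAC.
by rewrite e2 eAE; field; rewrite ?h33 ?h32.
Qed.


Lemma BBE (K : fieldType) md (s : K) L (y : 'I_L -> K) v1 v2 st :
  op_apply (opB md s y v2) (op_apply (opB md s y v1) (@vac K L)) st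
  = TT md s y o0 o1 v2 o0 o1 v1 st (vac0 L).
Proof.
rewrite /TT {1}/op_apply; apply: eq_bigr => si _.
by rewrite opvac /opB o0E o1E.
Qed.

Lemma EE (K : fieldType) md (s : K) L (y : 'I_L -> K) v st :
  op_apply (opE md s y v) (@vac K L) st = Tmono md s y o0 o2 v st (vac0 L).
Proof. by rewrite opvac /opE o0E o2E. Qed.

Lemma Fvanish (K : fieldType) md (s : K) L (y : 'I_L -> K) (us : seq K) v1 v2 :
  (forall j, y j != 0) ->
  omega md s y v1 = 0 -> Fpf md s y us v1 v2 = 0.
Proof.
move=> y0 /eqP; rewrite /omega prodf_seq_eq0 => /hasP[j _ /= /eqP hj].
have hv : v1 / y j = zeta md s.
  by rewrite (subr0_eq hj) mulrC mulKf ?y0.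
have Z : forall st, op_apply (opB md s y v2) (op_apply (opB md s y v1) (@vac K L)) st = 0.
  move=> st; rewrite /op_apply big1 // => si _.
  have := opvac (opB md s y v1) si; rewrite /op_apply => ->.
  by rewrite /opB o0E o1E (Bvac_zero _ hv) mulr0.
rewrite /Fpf.
set w := op_apply _ _.
have H : forall st, w st = 0 * w st + 0 * w st by move=> st; rewrite !mul0r addr0 /w Z.
by rewrite (lin md s y us H) !mul0r addr0.
Qed.


Theorem lemma4p1 (K : fieldType) (m : model) (s : K) (n : nat)
    (y : 'I_n.+1 -> K) (x0 x1 : K) (xr : seq K) :
  s != 0 -> (forall j, y j != 0) ->
  x0 != 0 -> x1 != 0 -> all (fun x => x != 0) xr ->
  size xr = n ->
  wd m s 3 3 (x1 / x0) != 0 -> wd m s 3 2 (x1 / x0) != 0 ->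
  let r := x1 / x0 in
  let Omega0 := wa m s r / wd m s 3 3 r * Lam m s y x0 in
  let Omega1 := (wd m s 1 2 r / wd m s 3 2 r - wd m s 1 3 r / wd m s 3 3 r)
                * Lam m s y x1 in
  let Upsilon0 := wa m s r / wd m s 3 2 r * omega m s y x0 in
  let Upsilon1 := (wd m s 2 3 r / wd m s 3 3 r - wd m s 2 2 r / wd m s 3 2 r)
                  * omega m s y x1 in
  Omega0 * Zpf m s y (x1 :: xr) + Omega1 * Zpf m s y (x0 :: xr)
  = Upsilon0 * Hpf m s y xr x0 x1 + Upsilon1 * Hpf m s y xr x1 x0.
Proof.
move=> s0 y0 x00 x10 _ _ d33 d32 r O0 O1 U0 U1.
have key : forall v1 v2, omega m s y v1 * (Fpf m s y xr v1 v2 / omega m s y v1)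
    = Fpf m s y xr v1 v2.
  move=> v1 v2; have [h|h] := eqVneq (omega m s y v1) 0.
    by rewrite (Fvanish _ _ y0 h) mul0r mulr0.
  by rewrite mulrC divfK.
have E0 : U0 * Hpf m s y xr x0 x1 = wa m s r / wd m s 3 2 r * Fpf m s y xr x0 x1.
  by rewrite /U0 /Hpf -mulrA key.
have E1 : U1 * Hpf m s y xr x1 x0
    = (wd m s 2 3 r / wd m s 3 3 r - wd m s 2 2 r / wd m s 3 2 r) * Fpf m s y xr x1 x0.
  by rewrite /U1 /Hpf -mulrA key.
rewrite E0 E1 /Zpf /Fpf /=.
pose u := fun st => O0 * op_apply (opE m s y x1) (@vac K n.+1) st
                  + O1 * op_apply (opE m s y x0) (@vac K n.+1) st.
pose w := fun st => wa m s r / wd m s 3 2 r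
                    * op_apply (opB m s y x1) (op_apply (opB m s y x0) (@vac K n.+1)) st
                  + (wd m s 2 3 r / wd m s 3 3 r - wd m s 2 2 r / wd m s 3 2 r)
                    * op_apply (opB m s y x0) (op_apply (opB m s y x1) (@vac K n.+1)) st.
rewrite -(lin m s y xr (v := u) (fun st => erefl)).
rewrite -(lin m s y xr (v := w) (fun st => erefl)).
have Huw : forall st, u st = 1 * w st + 0 * w st.
  move=> st; rewrite mul1r mul0r addr0 /u /w !EE !BBE /O0 /O1.
  apply: (alg (AE := TT m s y o0 o0 x0 o0 o2 x1 st (vac0 _)) d33 d32).
    by rewrite -!TTA; exact: rel31.
  by rewrite -TTA; exact: rel22.
by rewrite (lin m s y xr Huw) mul1r mul0r addr0.
Qed.
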